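(* Let $d>1$ be a square-free positive integer and let $M=\mathbb{Q}(i\sqrt{d})$, where $i=\sqrt{-1}$. Let $n\geq 1$, let $\alpha_1,\ldots,\alpha_n$ be distinct non-zero real numbers, and let $\lambda_j=\lambda_{j1}+i\lambda_{j2}$ with $\lambda_{j1},\lambda_{j2}\in\mathbb{R}$ for $1\leq j\leq n$. Let $c_0>0$. Let $X,Y\in\mathbb{Z}_M$ satisfy \[ \left|\prod_{j=1}^n(X-\alpha_j Y+\lambda_j)\right|\leq c_0 . \] (a) If $d\equiv 3 \pmod 4$, write $X=x_1+x_2\frac{1+i\sqrt{d}}{2}$, $Y=y_1+y_2\frac{1+i\sqrt{d}}{2}$ with $x_1,x_2,y_1,y_2\in\mathbb{Z}$. Then \[ \left|\prod_{j=1}^n\bigl((2x_1+x_2)-\alpha_j (2y_1+y_2)+2\lambda_{j1}\bigr)\right|\leq 2^n c_0 \quad\text{and}\quad \left|\prod_{j=1}^n\Bigl(x_2-\alpha_j y_2+\frac{2}{\sqrt{d}}\lambda_{j2}\Bigr)\right|\leq \frac{2^n c_0}{\sqrt{d}^{\,n}}. \] (b) If $d\equiv 1,2 \pmod 4$, write $X=x_1+x_2 i\sqrt{d}$, $Y=y_1+y_2 i\sqrt{d}$ with $x_1,x_2,y_1,y_2\in\mathbb{Z}$. Then \[ \left|\prod_{j=1}^n(x_1-\alpha_j y_1+\lambda_{j1})\right|\leq c_0 \quad\text{and}\quad \left|\prod_{j=1}^n\Bigl(x_2-\alpha_j y_2+\frac{1}{\sqrt{d}}\lambda_{j2}\Bigr)\right|\leq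 \frac{c_0}{\sqrt{d}^{\,n}}. \]
   Context: $\mathbb{Z}_M$ denotes the ring of integers of the number field $M$, viewed as a subset of $\mathbb{C}$ via $i\sqrt{d}\in\mathbb{C}$. For $d\equiv 3\pmod 4$ an integral basis of $\mathbb{Z}_M$ is $\{1,\frac{1+i\sqrt{d}}{2}\}$, and for $d\equiv 1,2\pmod 4$ it is $\{1,i\sqrt{d}\}$, so the integers $x_1,x_2,y_1,y_2$ are uniquely determined. *)

(* Defs.v *)
From HB Require Import structures.
From mathcomp Require Import all_boot all_order all_algebra.
From mathcomp Require Import complex.
Set Implicit Arguments. Unset Strict Implicit. Unset Printing Implicit Defensive.
Import Order.TTheory GRing.Theory Num.Theory.
Local Open Scope ring_scope.

Definition squarefree_nat (d : nat) : Prop :=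
  forall p : nat, prime p -> ~~ (p * p %| d)%N.

Definition cR (R : rcfType) (x : R) : R[i] := Complex x 0.

Definition isqrt (R : rcfType) (d : nat) : R[i] := Complex 0 (Num.sqrt (d%:R : R)).

(* second element of the integral basis of Z_M, M = Q(i sqrt d):
   (1 + i sqrt d)/2 if d = 3 mod 4, and i sqrt d if d = 1,2 mod 4 *)
Definition omega (R : rcfType) (d : nat) : R[i] :=
  if (d %% 4 == 3)%N then (1 + isqrt R d) / 2 else isqrt R d.

Definition ZM (R : rcfType) (d : nat) (a b : int) : R[i] :=
  a%:~R + b%:~R * omega R d.

(* Main.v *)
Require Import Defs.
From HB Require Import structures.
From mathcomp Require Import all_boot all_order all_algebra.
From mathcomp Require Import complex.
From mathcomp Require Import ring.
Import Order.TTheory GRing.Theory Num.Theory.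
Local Open Scope ring_scope.

Lemma absle_sqrt (R : rcfType) (a b : R) : `|a| <= Num.sqrt (a ^+ 2 + b ^+ 2).
Proof.
rewrite -sqrtr_sqr; apply: ler_wsqrtr; rewrite lerDl; exact: sqr_ge0.
Qed.

Lemma ReIm_bound (R : rcfType) n (z : 'I_n -> R[i]) (c : R) :
  `| \prod_(j < n) z j | <= cR c ->
  `| \prod_(j < n) complex.Re (z j) | <= c /\ `| \prod_(j < n) complex.Im (z j) | <= c.
Proof.
rewrite normr_prod.
have -> : \prod_(j < n) `|z j| = cR (\prod_(j < n) Num.sqrt (complex.Re (z j) ^+ 2 + complex.Im (z j) ^+ 2)).
  rewrite /cR complexr0 (rmorph_prod (real_complex R)); apply: eq_bigr => j _; exact: normc_def.
rewrite /cR complexr0 lecR => H.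
split; rewrite normr_prod; apply: le_trans H; apply: ler_prod => j _;
  rewrite normr_ge0 /=.
- exact: absle_sqrt.
- by rewrite addrC absle_sqrt.
Qed.

Lemma scale_prod (R : rcfType) n (F G : 'I_n -> R) (k c : R) :
  0 <= k -> (forall j, G j = k * F j) -> `|\prod_(j < n) F j| <= c ->
  `|\prod_(j < n) G j| <= k ^+ n * c.
Proof.
move=> k0 HG H.
rewrite (eq_bigr _ (fun j _ => HG j)) big_split /= prodr_const card_ord normrM normrX.
rewrite ger0_norm //; apply: ler_wpM2l => //; exact: exprn_ge0.
Qed.

Lemma cR_mul (R : rcfType) (a u v : R) : cR a * Complex u v = Complex (a * u) (a * v).
Proof. apply/eqP; rewrite eq_complex /= !mul0r subr0 addr0 !eqxx //. Qed.

Lemma int_C (R : rcfType) (a : int) : (a%:~R : R[i]) = Complex (a%:~R) 0.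
Proof. by rewrite -(rmorph_int (real_complex R)). Qed.

Lemma ZM3 (R : rcfType) d a b : (d %% 4 == 3)%N ->
  ZM R d a b = Complex (a%:~R + b%:~R / 2) (b%:~R * Num.sqrt (d%:R) / 2).
Proof.
move=> H; rewrite /ZM /omega H /isqrt !int_C.
have -> : (1 + Complex 0 (Num.sqrt (d%:R : R))) / 2 = Complex (1/2) (Num.sqrt (d%:R) / 2).
  apply: (@mulIf _ 2); first by rewrite pnatr_eq0.
  rewrite divfK; last by rewrite pnatr_eq0.
  apply/eqP; rewrite eq_complex /=; apply/andP; split; apply/eqP; field; by rewrite ?pnatr_eq0.
apply/eqP; rewrite eq_complex /=; apply/andP; split; apply/eqP; field; by rewrite ?pnatr_eq0.
Qed.

Lemma ZM12 (R : rcfType) d a b : (d %% 4 != 3)%N ->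
  ZM R d a b = Complex (a%:~R) (b%:~R * Num.sqrt (d%:R)).
Proof.
move=> H; rewrite /ZM /omega (negbTE H) /isqrt !int_C.
apply/eqP; rewrite eq_complex /=; apply/andP; split; apply/eqP; ring.
Qed.

Lemma zform (R : rcfType) (p q u v al l1 l2 : R) :
  Complex p q - cR al * Complex u v + Complex l1 l2 = Complex (p - al * u + l1) (q - al * v + l2).
Proof.
apply/eqP; rewrite eq_complex /=; apply/andP; split; apply/eqP; ring.
Qed.
Theorem theorem4 (R : rcfType) (d n : nat) (alpha lam1 lam2 : 'I_n -> R) (c0 : R)
    (x1 x2 y1 y2 : int) :
  (1 < d)%N -> squarefree_nat d -> (1 <= n)%N ->
  injective alpha -> (forall j, alpha j != 0) -> 0 < c0 ->
  `| \prod_(j < n) (ZM R d x1 x2 - cR (alpha j) * ZM R d y1 y2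
                     + Complex (lam1 j) (lam2 j)) | <= cR c0 ->
  ((d %% 4 == 3)%N ->
     `| \prod_(j < n) ((2 * x1 + x2)%:~R - alpha j * (2 * y1 + y2)%:~R
                        + 2 * lam1 j) | <= 2 ^+ n * c0
     /\ `| \prod_(j < n) (x2%:~R - alpha j * y2%:~R
                        + 2 / Num.sqrt (d%:R) * lam2 j) |
          <= 2 ^+ n * c0 / Num.sqrt (d%:R) ^+ n)
  /\
  ((d %% 4 == 1)%N || (d %% 4 == 2)%N ->
     `| \prod_(j < n) (x1%:~R - alpha j * y1%:~R + lam1 j) | <= c0
     /\ `| \prod_(j < n) (x2%:~R - alpha j * y2%:~R
                        + 1 / Num.sqrt (d%:R) * lam2 j) |
          <= c0 / Num.sqrt (d%:R) ^+ n).

Proof.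
move=> hd _ _ _ _ hc H.
have [HR HI] := ReIm_bound _ _ _ _ H.
have s0 : 0 < Num.sqrt (d%:R : R).
  by rewrite sqrtr_gt0 ltr0n (leq_trans _ hd).
have sn0 : Num.sqrt (d%:R : R) != 0 by rewrite gt_eqF.
split => Hd; split.
- rewrite -[2 ^+ n * c0]/(2 ^+ n * c0); apply: (scale_prod _ _ _ _ _ _ _ _ HR); first by [].
  move=> j; rewrite !(ZM3 _ _ _ _ Hd) zform /= !intrD !intrM; field; by rewrite ?pnatr_eq0.
- rewrite -[X in _ <= X](_ : (2 / Num.sqrt (d%:R : R)) ^+ n * c0 = _); last first.
    by rewrite expr_div_n mulrAC.
  apply: (scale_prod _ _ _ _ _ _ _ _ HI).
  + by rewrite divr_ge0 // ltW.
  + move=> j; rewrite !(ZM3 _ _ _ _ Hd) zform /=; field; by rewrite ?pnatr_eq0.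
- have Hd' : (d %% 4 != 3)%N by case/orP: Hd => /eqP ->.
  rewrite -[X in _ <= X](_ : 1 ^+ n * c0 = c0); last by rewrite expr1n mul1r.
  apply: (scale_prod _ _ _ _ _ _ _ _ HR); first by [].
  move=> j; rewrite !(ZM12 _ _ _ _ Hd') zform /=; ring.
- have Hd' : (d %% 4 != 3)%N by case/orP: Hd => /eqP ->.
  rewrite -[X in _ <= X](_ : (1 / Num.sqrt (d%:R : R)) ^+ n * c0 = _); last first.
    by rewrite expr_div_n expr1n mulrC mul1r.
  apply: (scale_prod _ _ _ _ _ _ _ _ HI).
  + by rewrite divr_ge0 // ltW.
  + move=> j; rewrite !(ZM12 _ _ _ _ Hd') zform /=; field; by rewrite ?pnatr_eq0.
Qed.
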